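(* Let $\mathfrak g$ be a Kac--Moody algebra over a field $F$ of characteristic $0$ of simply laced affine type (i.e. with diagram $A_n^+$ for $n\ge2$, $D_n^+$ for $n\ge4$, $E_6^+$, $E_7^+$ or $E_8^+$), let $\mathfrak k$ be its maximal compact subalgebra and let $\rho$ be a generalized spin representation of $\mathfrak k$. Let $\delta$ be the fundamental positive imaginary root (null root) of $\mathfrak g$ and $\mathfrak k_\delta:=\{x+\omega(x):x\in\mathfrak g_\delta\}$. Then $\ker\rho$ contains the ideal of $\mathfrak k$ generated by $\mathfrak k_\delta$.
   Context: $\mathfrak g$ is $Q$-graded, $Q=\bigoplus_i\mathbb Z v_i$, with $\deg e_i=v_i$, $\deg f_i=-v_i$, $\deg h_i=0$; $\mathfrak g_\alpha$ is the component of degree $\alpha$. For affine type, $\delta=\sum_i a_iv_i$ is the unique positive imaginary root with the standard marks $a_i$ (the smallest positive $\mathbb Z$-combination of simple roots annihilated by the Cartan matrix); e.g. for $A_n^+$ (a cycle on $n+1$ vertices) all $a_i=1$. $\omega$ is the Cartan--Chevalley involution ($e_i\mapsto-f_i$, $f_i\mapsto-e_i$, $h_i\mapsto-h_i$), $\mathfrak k$ its fixed points, generated by $X_i=e_i-f_i$ with relations $[X_i,[X_i,X_j]]=-X_j$ for adjacent and $[X_i,X_j]=0$ for non-adjacent $i\neq j$. With $L=F(I)$, $I^2=-1$, a generalized spin representation is a Lie algebra homomorphism $\rho:\mathfrak k\to\operatorname{End}(L^s)$ with $\rho(X_i)^2=-\tfrac14\mathrm{id}_s$ for all $i$. *)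

(* Defs.v *)
From HB Require Import structures.
From mathcomp Require Import all_boot all_order all_algebra all_field.
Set Implicit Arguments. Unset Strict Implicit. Unset Printing Implicit Defensive.
Import Order.TTheory GRing.Theory Num.Theory.
Local Open Scope ring_scope.

Section KM.
Variable F : fieldType.

Definition is_lie (G : lmodType F) (br : G -> G -> G) : Prop :=
  [/\ (forall (a : F) x y z, br (a *: x + y) z = a *: br x z + br y z),
      (forall (a : F) x y z, br z (a *: x + y) = a *: br z x + br z y),
      (forall x, br x x = 0) &
      (forall x y z, br x (br y z) + br y (br z x) + br z (br x y) = 0)].

Definition is_lie_hom (G M : lmodType F) (brG : G -> G -> G) (brM : M -> M -> M)
  (phi : G -> M) : Prop :=
  (forall (a : F) x y, phi (a *: x + y) = a *: phi x + phi y) /\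
  (forall x y, phi (brG x y) = brM (phi x) (phi y)).

Variable m : nat.

Definition serre_rel (A : 'M[int]_m) (G : lmodType F) (br : G -> G -> G)
  (e f h : 'I_m -> G) : Prop :=
  [/\ (forall i j, br (h i) (h j) = 0),
      (forall i j, br (h i) (e j) = (A i j)%:~R *: e j),
      (forall i j, br (h i) (f j) = - ((A i j)%:~R *: f j)),
      (forall i j, br (e i) (f j) = if i == j then h i else 0) &
      (forall i j, i != j -> iter `|1 - A i j|%N (br (e i)) (e j) = 0) /\
      (forall i j, i != j -> iter `|1 - A i j|%N (br (f i)) (f j) = 0)].

(* (G, br, e, f, h) is the Kac--Moody algebra g(A): the Lie algebra presented
   by generators e_i, f_i, h_i and the Chevalley--Serre relations, i.e. the
   initial object among Lie algebras with such elements. *)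
Definition is_KM_algebra (A : 'M[int]_m) (G : lmodType F) (br : G -> G -> G)
  (e f h : 'I_m -> G) : Prop :=
  [/\ is_lie br, serre_rel A br e f h &
      forall (M : lmodType F) (brM : M -> M -> M) (e' f' h' : 'I_m -> M),
        is_lie brM -> serre_rel A brM e' f' h' ->
        (exists phi : G -> M, is_lie_hom br brM phi /\
           forall i, [/\ phi (e i) = e' i, phi (f i) = f' i & phi (h i) = h' i])
        /\ (forall phi1 phi2 : G -> M,
              is_lie_hom br brM phi1 -> is_lie_hom br brM phi2 ->
              (forall i, [/\ phi1 (e i) = e' i, phi1 (f i) = f' i & phi1 (h i) = h' i]) ->
              (forall i, [/\ phi2 (e i) = e' i, phi2 (f i) = f' i & phi2 (h i) = h' i]) ->
              forall x, phi1 x = phi2 x)].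

Definition simple_root (i : 'I_m) : 'rV[int]_m := delta_mx 0 i.

(* homogeneous G (br) e f h alpha x : x lies in the root space g_alpha for the
   Q-grading deg e_i = v_i, deg f_i = -v_i, deg h_i = 0 (g_alpha is the span of
   the bracket monomials in the generators of degree alpha). *)
Inductive homogeneous (G : lmodType F) (br : G -> G -> G) (e f h : 'I_m -> G)
  : 'rV[int]_m -> G -> Prop :=
| homog0 alpha : homogeneous br e f h alpha 0
| homogD alpha x y : homogeneous br e f h alpha x -> homogeneous br e f h alpha y ->
    homogeneous br e f h alpha (x + y)
| homogZ alpha (c : F) x : homogeneous br e f h alpha x ->
    homogeneous br e f h alpha (c *: x)
| homog_e i : homogeneous br e f h (simple_root i) (e i)
| homog_f i : homogeneous br e f h (- simple_root i) (f i)
| homog_h i : homogeneous br e f h 0 (h i)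
| homog_br alpha beta x y : homogeneous br e f h alpha x ->
    homogeneous br e f h beta y -> homogeneous br e f h (alpha + beta) (br x y).

(* Ideal of the subalgebra k = {x | omega x = x} generated by the set S (S ⊆ k):
   the smallest subspace containing S and stable under [y, _] for y in k. *)
Inductive in_k_ideal (G : lmodType F) (br : G -> G -> G) (omega : G -> G)
  (S : G -> Prop) : G -> Prop :=
| kid_gen x : S x -> in_k_ideal br omega S x
| kid0 : in_k_ideal br omega S 0
| kidD x y : in_k_ideal br omega S x -> in_k_ideal br omega S y ->
    in_k_ideal br omega S (x + y)
| kidZ (c : F) x : in_k_ideal br omega S x -> in_k_ideal br omega S (c *: x)
| kid_br y x : omega y = y -> in_k_ideal br omega S x ->
    in_k_ideal br omega S (br y x).

End KM.

Definition simply_laced (m : nat) (A : 'M[int]_m) : Prop :=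
  forall i j, A i j = A j i /\
    (if i == j then A i j = 2%:Z else A i j = 0 \/ A i j = -1).

Definition indecomposable (m : nat) (A : 'M[int]_m) : Prop :=
  forall P : {set 'I_m}, P != set0 -> P != setT ->
    exists i j, [/\ i \in P, j \notin P & A i j != 0].

Definition positive_null (m : nat) (A : 'M[int]_m) (u : 'I_m -> nat) : Prop :=
  (forall i, (0 < u i)%N) /\
  (forall i, \sum_(j < m) A i j * (u j)%:Z = 0).

(* Affine type (Kac, Thm 4.3): indecomposable with a positive null vector. *)
Definition affine_type (m : nat) (A : 'M[int]_m) : Prop :=
  indecomposable A /\ exists u, positive_null A u.

(* The marks a_i of delta = sum a_i v_i : the smallest positive integral null
   vector of A. *)
Definition null_root_marks (m : nat) (A : 'M[int]_m) (a : 'I_m -> nat) : Prop :=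
  positive_null A a /\ forall u, positive_null A u -> forall i, (a i <= u i)%N.

Definition null_root (m : nat) (a : 'I_m -> nat) : 'rV[int]_m :=
  \row_i (a i)%:Z.

(* Main.v *)
Require Import Defs.
From HB Require Import structures.
From mathcomp Require Import all_boot all_order all_algebra all_field.
From mathcomp Require Import zify.
Import Order.TTheory GRing.Theory Num.Theory.
Local Open Scope ring_scope.
Set Implicit Arguments. Unset Strict Implicit. Unset Printing Implicit Defensive.


Section LieBasics.
Variable F : fieldType.
Variable G : lmodType F.
Variable br : G -> G -> G.
Hypothesis hL : is_lie br.

Lemma brDl x y z : br (x + y) z = br x z + br y z.
Proof. have [H _ _ _] := hL; by rewrite -(scale1r x) H !scale1r. Qed.
Lemma brDr x y z : br z (x + y) = br z x + br z y.
Proof. have [_ H _ _] := hL; by rewrite -(scale1r x) H !scale1r. Qed.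
Lemma br0l z : br 0 z = 0.
Proof. by apply: (addrI (br 0 z)); rewrite -brDl !addr0. Qed.
Lemma br0r z : br z 0 = 0.
Proof. by apply: (addrI (br z 0)); rewrite -brDr !addr0. Qed.
Lemma brZl a x z : br (a *: x) z = a *: br x z.
Proof. have [H _ _ _] := hL; by rewrite -(addr0 (a *: x)) H br0l addr0. Qed.
Lemma brZr a x z : br z (a *: x) = a *: br z x.
Proof. have [_ H _ _] := hL; by rewrite -(addr0 (a *: x)) H br0r addr0. Qed.
Lemma brNl x z : br (- x) z = - br x z.
Proof. by rewrite -scaleN1r brZl scaleN1r. Qed.
Lemma brNr x z : br z (- x) = - br z x.
Proof. by rewrite -scaleN1r brZr scaleN1r. Qed.
Lemma brBl x y z : br (x - y) z = br x z - br y z.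
Proof. by rewrite brDl brNl. Qed.
Lemma brBr x y z : br z (x - y) = br z x - br z y.
Proof. by rewrite brDr brNr. Qed.
Lemma brC x y : br x y = - br y x.
Proof.
have [_ _ H _] := hL; have := H (x + y).
rewrite brDl !brDr !H add0r addr0 => /eqP; rewrite addr_eq0 => /eqP //.
Qed.
Lemma jacobi x y z : br x (br y z) = br (br x y) z + br y (br x z).
Proof.
have [_ _ _ H] := hL; move: (H x y z).
rewrite (brC z x) brNr (brC z (br x y)) => /eqP.
by rewrite -addrA -opprD subr_eq0 => /eqP ->; rewrite addrC.
Qed.
End LieBasics.


Section Tri.
Variables (F : fieldType) (m : nat) (A : 'M[int]_m) (G : lmodType F).
Variables (br : G -> G -> G) (e f h : 'I_m -> G).
Hypothesis hL : is_lie br.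
Hypothesis hS : serre_rel A br e f h.
Local Notation sr := (@simple_root m).

Inductive Pos : 'rV[int]_m -> G -> Prop :=
| Pe i : Pos (sr i) (e i)
| Pbr i b x : Pos b x -> Pos (sr i + b) (br (e i) x)
| P0 a : Pos a 0
| PD a x y : Pos a x -> Pos a y -> Pos a (x + y)
| PZ a (c : F) x : Pos a x -> Pos a (c *: x).

Inductive Neg : 'rV[int]_m -> G -> Prop :=
| Nf i : Neg (- sr i) (f i)
| Nbr i b x : Neg b x -> Neg (- sr i + b) (br (f i) x)
| N0 a : Neg a 0
| ND a x y : Neg a x -> Neg a y -> Neg a (x + y)
| NZ a (c : F) x : Neg a x -> Neg a (c *: x).

Inductive Hsp : G -> Prop :=
| Hh i : Hsp (h i)
| H0 : Hsp 0
| HD x y : Hsp x -> Hsp y -> Hsp (x + y)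
| HZ (c : F) x : Hsp x -> Hsp (c *: x).

Lemma PN a x : Pos a x -> Pos a (- x).
Proof. by move=> H; rewrite -scaleN1r; apply: PZ. Qed.
Lemma PB a x y : Pos a x -> Pos a y -> Pos a (x - y).
Proof. by move=> H1 H2; apply: PD => //; apply: PN. Qed.
Lemma NN a x : Neg a x -> Neg a (- x).
Proof. by move=> H; rewrite -scaleN1r; apply: NZ. Qed.
Lemma NB a x y : Neg a x -> Neg a y -> Neg a (x - y).
Proof. by move=> H1 H2; apply: ND => //; apply: NN. Qed.
Lemma HN x : Hsp x -> Hsp (- x).
Proof. by move=> H; rewrite -scaleN1r; apply: HZ. Qed.

Lemma hhe i j : br (h i) (e j) = (A i j)%:~R *: e j.
Proof. by case: hS. Qed.
Lemma hhf i j : br (h i) (f j) = - ((A i j)%:~R *: f j).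
Proof. by case: hS. Qed.
Lemma hef i j : br (e i) (f j) = if i == j then h i else 0.
Proof. by case: hS. Qed.
Lemma hhh i j : br (h i) (h j) = 0.
Proof. by case: hS. Qed.

Lemma HbrPos z a x : Hsp z -> Pos a x -> Pos a (br z x).
Proof.
move=> Hz Hx; elim: Hz => [j||z1 z2 _ IH1 _ IH2|c z1 _ IH].
- elim: Hx => {a x} [i|i b x Hx0 IH||a x y _ IH1 _ IH2|a c x _ IH].
  + by rewrite hhe; apply: PZ; apply: Pe.
  + rewrite (jacobi hL) hhe (brZl hL); apply: PD; first by apply: PZ; apply: Pbr.
    by apply: Pbr.
  + by rewrite (br0r hL); apply: P0.
  + by rewrite (brDr hL); apply: PD.
  + by rewrite (brZr hL); apply: PZ.
- by rewrite (br0l hL); apply: P0.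
- by rewrite (brDl hL); apply: PD.
- by rewrite (brZl hL); apply: PZ.
Qed.

Lemma HbrNeg z a x : Hsp z -> Neg a x -> Neg a (br z x).
Proof.
move=> Hz Hx; elim: Hz => [j||z1 z2 _ IH1 _ IH2|c z1 _ IH].
- elim: Hx => {a x} [i|i b x Hx0 IH||a x y _ IH1 _ IH2|a c x _ IH].
  + by rewrite hhf; apply: NN; apply: NZ; apply: Nf.
  + rewrite (jacobi hL) hhf (brNl hL) (brZl hL); apply: ND; first by apply: NN; apply: NZ; apply: Nbr.
    by apply: Nbr.
  + by rewrite (br0r hL); apply: N0.
  + by rewrite (brDr hL); apply: ND.
  + by rewrite (brZr hL); apply: NZ.
- by rewrite (br0l hL); apply: N0.
- by rewrite (brDl hL); apply: ND.
- by rewrite (brZl hL); apply: NZ.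
Qed.

Lemma HbrH z w : Hsp z -> Hsp w -> br z w = 0.
Proof.
move=> Hz Hw; elim: Hz => [j||z1 z2 _ IH1 _ IH2|c z1 _ IH].
- elim: Hw => [i||w1 w2 _ IH1 _ IH2|c w1 _ IH].
  + exact: hhh.
  + exact: br0r.
  + by rewrite (brDr hL) IH1 IH2 addr0.
  + by rewrite (brZr hL) IH scaler0.
- exact: br0l.
- by rewrite (brDl hL) IH1 IH2 addr0.
- by rewrite (brZl hL) IH scaler0.
Qed.

Lemma PosPos a x b y : Pos a x -> Pos b y -> Pos (a + b) (br x y).
Proof.
move=> Hx; elim: Hx b y => {a x} [i|i b' x _ IH|a0|a x1 x2 _ IH1 _ IH2|a c x _ IH] b y Hy.
- exact: Pbr.
- have -> : br (br (e i) x) y = br (e i) (br x y) - br x (br (e i) y).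
    by rewrite (jacobi hL (e i)) addrK.
  apply: PB; first by rewrite -addrA; apply: Pbr; apply: IH.
  by rewrite (addrC (sr i)) -addrA; apply: IH; apply: Pbr.
- by rewrite (br0l hL); apply: P0.
- by rewrite (brDl hL); apply: PD; [apply: IH1|apply: IH2].
- by rewrite (brZl hL); apply: PZ; apply: IH.
Qed.

Lemma NegNeg a x b y : Neg a x -> Neg b y -> Neg (a + b) (br x y).
Proof.
move=> Hx; elim: Hx b y => {a x} [i|i b' x _ IH|a0|a x1 x2 _ IH1 _ IH2|a c x _ IH] b y Hy.
- exact: Nbr.
- have -> : br (br (f i) x) y = br (f i) (br x y) - br x (br (f i) y).
    by rewrite (jacobi hL (f i)) addrK.
  apply: NB; first by rewrite -addrA; apply: Nbr; apply: IH.
  by rewrite (addrC (- sr i)) -addrA; apply: IH; apply: Nbr.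
- by rewrite (br0l hL); apply: N0.
- by rewrite (brDl hL); apply: ND; [apply: IH1|apply: IH2].
- by rewrite (brZl hL); apply: NZ; apply: IH.
Qed.

Definition Hd (g : 'rV[int]_m) z := (g = 0 /\ Hsp z) \/ z = 0.

Lemma Hd0 g : Hd g 0. Proof. by right. Qed.
Lemma HdD g x y : Hd g x -> Hd g y -> Hd g (x + y).
Proof.
move=> Hx0 Hy0; case: Hx0 => [[E Hx]|->]; last by rewrite add0r.
case: Hy0 => [[_ Hy]|->]; last by rewrite addr0; left.
by left; split=> //; apply: HD.
Qed.
Lemma HdZ g c x : Hd g x -> Hd g (c *: x).
Proof. by case=> [[-> Hx]|->]; [left; split=> //; apply: HZ|right; rewrite scaler0]. Qed.

Definition W g z := exists z1 z2, [/\ z = z1 + z2, Pos g z1 & Hd g z2].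
Definition V g z := exists z1 z2 z3, [/\ z = z1 + z2 + z3, Pos g z1, Neg g z2 & Hd g z3].

Lemma W0 g : W g 0. Proof. by exists 0, 0; split; rewrite ?addr0 //; [apply: P0|apply: Hd0]. Qed.
Lemma WD g x y : W g x -> W g y -> W g (x + y).
Proof.
move=> [x1 [x2 [-> H1 H2]]] [y1 [y2 [-> H3 H4]]]; exists (x1 + y1), (x2 + y2); split.
- by rewrite addrACA.
- exact: PD.
- exact: HdD.
Qed.
Lemma WZ g c x : W g x -> W g (c *: x).
Proof.
move=> [x1 [x2 [-> H1 H2]]]; exists (c *: x1), (c *: x2); split.
- by rewrite scalerDr.
- exact: PZ.
- exact: HdZ.
Qed.
Lemma WP g x : Pos g x -> W g x.
Proof. by move=> H; exists x, 0; split; rewrite ?addr0 //; apply: Hd0. Qed.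

Lemma V0 g : V g 0.
Proof. by exists 0, 0, 0; split; rewrite ?addr0 //; [apply: P0|apply: N0|apply: Hd0]. Qed.
Lemma VD g x y : V g x -> V g y -> V g (x + y).
Proof.
move=> [x1 [x2 [x3 [-> H1 H2 H3]]]] [y1 [y2 [y3 [-> H4 H5 H6]]]].
exists (x1 + y1), (x2 + y2), (x3 + y3); split.
- by rewrite addrACA (addrACA x1).
- exact: PD.
- exact: ND.
- exact: HdD.
Qed.
Lemma VZ g c x : V g x -> V g (c *: x).
Proof.
move=> [x1 [x2 [x3 [-> H1 H2 H3]]]]; exists (c *: x1), (c *: x2), (c *: x3); split.
- by rewrite !scalerDr.
- exact: PZ.
- exact: NZ.
- exact: HdZ.
Qed.
Lemma VN g x : V g x -> V g (- x).
Proof. by move=> H; rewrite -scaleN1r; apply: VZ. Qed.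
Lemma VP g x : Pos g x -> V g x.
Proof. by move=> H; exists x, 0, 0; split; rewrite ?addr0 //; [apply: N0|apply: Hd0]. Qed.
Lemma VNg g x : Neg g x -> V g x.
Proof. by move=> H; exists 0, x, 0; split; rewrite ?addr0 ?add0r //; [apply: P0|apply: Hd0]. Qed.
Lemma VH g x : Hd g x -> V g x.
Proof. by move=> H; exists 0, 0, x; split; rewrite ?add0r //; [apply: P0|apply: N0]. Qed.
Lemma VW g x : W g x -> V g x.
Proof. by move=> [x1 [x2 [-> H1 H2]]]; apply: VD; [apply: VP|apply: VH]. Qed.

Lemma EbrHd i g z : Hd g z -> Pos (sr i + g) (br (e i) z).
Proof.
case=> [[-> Hz]|->]; last by rewrite (br0r hL); apply: P0.
by rewrite addr0 (brC hL); apply: PN; apply: HbrPos=> //; apply: Pe.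
Qed.
Lemma FbrHd i g z : Hd g z -> Neg (- sr i + g) (br (f i) z).
Proof.
case=> [[-> Hz]|->]; last by rewrite (br0r hL); apply: N0.
by rewrite addr0 (brC hL); apply: NN; apply: HbrNeg=> //; apply: Nf.
Qed.

Lemma FbrPos j a x : Pos a x -> W (a - sr j) (br (f j) x).
Proof.
elim=> {a x} [i|i b x Hx0 IH|a0|a x1 x2 _ IH1 _ IH2|a c x _ IH].
- rewrite (brC hL) hef; case: eqP => [<-|_].
  + exists 0, (- h i); split; first by rewrite add0r.
    * exact: P0.
    * by left; rewrite subrr; split=> //; apply: HN; apply: Hh.
  + by rewrite oppr0; apply: W0.
- rewrite (jacobi hL) (brC hL (f j)) hef; apply: WD.
  + case: eqP => [<-|_]; last by rewrite oppr0 (br0l hL); apply: W0.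
    by apply: WP; rewrite (addrC (sr i)) addrK (brNl hL); apply: PN; apply: HbrPos=> //; apply: Hh.
  + apply: WP; case: IH => z1 [z2 [-> H1 H2]]; rewrite (brDr hL) -addrA; apply: PD.
    * exact: Pbr.
    * exact: EbrHd.
- by rewrite (br0r hL); apply: W0.
- by rewrite (brDr hL); apply: WD.
- by rewrite (brZr hL); apply: WZ.
Qed.

Lemma FbrV j g z : V g z -> V (- sr j + g) (br (f j) z).
Proof.
move=> [z1 [z2 [z3 [-> H1 H2 H3]]]]; rewrite !(brDr hL); apply: VD; first apply: VD.
- by apply: VW; rewrite addrC; apply: FbrPos.
- by apply: VNg; apply: Nbr.
- by apply: VNg; apply: FbrHd.
Qed.

Lemma NegPos b y a x : Neg b y -> Pos a x -> V (b + a) (br y x).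
Proof.
move=> Hy; elim: Hy a x => {b y} [j|j b y Hy0 IH|b0|b y1 y2 _ IH1 _ IH2|b c y _ IH] a x Hx.
- by apply: VW; rewrite addrC; apply: FbrPos.
- have -> : br (br (f j) y) x = br (f j) (br y x) - br y (br (f j) x).
    by rewrite (jacobi hL (f j)) addrK.
  apply: VD; first by rewrite -addrA; apply: FbrV; apply: IH.
  apply: VN; case: (FbrPos j Hx) => z1 [z2 [-> H1 H2]]; rewrite (brDr hL); apply: VD.
  + by rewrite -addrA (addrC (- sr j)) -addrA; apply: IH.
  + case: H2 => [[E Hz]|->]; last by rewrite (br0r hL); apply: V0.
    have -> : - sr j + b + a = b by rewrite (addrC (- sr j)) -addrA (addrC (- sr j)) E addr0.
    by apply: VNg; rewrite (brC hL); apply: NN; apply: HbrNeg Hz Hy0.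
- by rewrite (br0l hL); apply: V0.
- by rewrite (brDl hL); apply: VD; [apply: IH1|apply: IH2].
- by rewrite (brZl hL); apply: VZ; apply: IH.
Qed.

Lemma VbrP a x b y : Pos a x -> V b y -> V (a + b) (br x y).
Proof.
move=> Hx [y1 [y2 [y3 [-> H1 H2 H3]]]]; rewrite !(brDr hL); apply: VD; first apply: VD.
- by apply: VP; apply: PosPos.
- by rewrite (brC hL) addrC; apply: VN; apply: NegPos.
- case: H3 => [[-> Hz]|->]; last by rewrite (br0r hL); apply: V0.
  by rewrite addr0 (brC hL); apply: VN; apply: VP; apply: HbrPos.
Qed.

Lemma VbrN a x b y : Neg a x -> V b y -> V (a + b) (br x y).
Proof.
move=> Hx [y1 [y2 [y3 [-> H1 H2 H3]]]]; rewrite !(brDr hL); apply: VD; first apply: VD.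
- exact: NegPos.
- by apply: VNg; apply: NegNeg.
- case: H3 => [[-> Hz]|->]; last by rewrite (br0r hL); apply: V0.
  by rewrite addr0 (brC hL); apply: VN; apply: VNg; apply: HbrNeg.
Qed.

Lemma VbrH a x b y : Hd a x -> V b y -> V (a + b) (br x y).
Proof.
case=> [[-> Hx]|->]; last by move=> _; rewrite (br0l hL); apply: V0.
move=> [y1 [y2 [y3 [-> H1 H2 H3]]]]; rewrite add0r !(brDr hL); apply: VD; first apply: VD.
- by apply: VP; apply: HbrPos.
- by apply: VNg; apply: HbrNeg.
- case: H3 => [[_ Hz]|->]; last by rewrite (br0r hL); apply: V0.
  by rewrite (HbrH Hx Hz); apply: V0.
Qed.

Lemma Vbr a x b y : V a x -> V b y -> V (a + b) (br x y).
Proof.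
move=> [x1 [x2 [x3 [-> H1 H2 H3]]]] Hy; rewrite !(brDl hL); apply: VD; first apply: VD.
- exact: VbrP.
- exact: VbrN.
- exact: VbrH.
Qed.

Lemma homogV a x : homogeneous br e f h a x -> V a x.
Proof.
elim=> {a x} [a|a x y _ IH1 _ IH2|a c x _ IH|i|i|i|a b x y _ IH1 _ IH2].
- exact: V0.
- exact: VD.
- exact: VZ.
- by apply: VP; apply: Pe.
- by apply: VNg; apply: Nf.
- by apply: VH; left; split=> //; apply: Hh.
- exact: Vbr.
Qed.
End Tri.


Section Deg.
Variables (m : nat) (A : 'M[int]_m).
Hypothesis hSL : simply_laced A.
Local Notation sr := (@simple_root m).

Definition Bf (x y : 'rV[int]_m) : int := \sum_i \sum_j x 0 i * A i j * y 0 j.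
Definition Dj j y := Bf (sr j) y.
Definition Qf x := Bf x x.
Definition ht (x : 'rV[int]_m) : int := \sum_i x 0 i.

Lemma BfDl x y z : Bf (x + y) z = Bf x z + Bf y z.
Proof.
rewrite /Bf -big_split; apply: eq_bigr => i _; rewrite -big_split; apply: eq_bigr => j _.
by rewrite mxE !mulrDl.
Qed.
Lemma BfDr x y z : Bf z (x + y) = Bf z x + Bf z y.
Proof.
rewrite /Bf -big_split; apply: eq_bigr => i _; rewrite -big_split; apply: eq_bigr => j _.
by rewrite mxE !mulrDr.
Qed.
Lemma BfNl x z : Bf (- x) z = - Bf x z.
Proof.
rewrite /Bf -sumrN; apply: eq_bigr => i _; rewrite -sumrN; apply: eq_bigr => j _.
by rewrite mxE !mulNr.
Qed.
Lemma BfNr x z : Bf z (- x) = - Bf z x.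
Proof.
rewrite /Bf -sumrN; apply: eq_bigr => i _; rewrite -sumrN; apply: eq_bigr => j _.
by rewrite mxE !mulrN.
Qed.
Lemma Bf_srl j y : Bf (sr j) y = \sum_l A j l * y 0 l.
Proof.
rewrite /Bf (bigD1 j) //= [X in _ + X]big1 ?addr0.
  by apply: eq_bigr => l _; rewrite /simple_root mxE !eqxx mul1r.
move=> k /negPf nk; apply: big1 => l _.
by rewrite /simple_root mxE nk andbF !mul0r.
Qed.
Lemma Bf_srr j x : Bf x (sr j) = Dj j x.
Proof.
rewrite /Dj Bf_srl /Bf; apply: eq_bigr => k _.
rewrite (bigD1 j) //= [X in _ + X]big1 ?addr0.
  by rewrite /simple_root mxE !eqxx mulr1 mulrC; case: (hSL j k) => ->.
move=> l /negPf nl; by rewrite /simple_root mxE nl andbF mulr0.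
Qed.
Lemma Bf_srsr j i : Bf (sr j) (sr i) = A j i.
Proof.
rewrite Bf_srl (bigD1 i) //= [X in _ + X]big1 ?addr0.
  by rewrite /simple_root mxE !eqxx mulr1.
move=> l /negPf nl; by rewrite /simple_root mxE nl andbF mulr0.
Qed.
Lemma Aii i : A i i = 2.
Proof. by case: (hSL i i); rewrite eqxx. Qed.

Lemma DjS j i b : Dj j (sr i + b) = A j i + Dj j b.
Proof. by rewrite /Dj BfDr Bf_srsr. Qed.
Lemma DjB j i b : Dj j (b - sr i) = Dj j b - A j i.
Proof. by rewrite /Dj BfDr BfNr Bf_srsr. Qed.
Lemma QfS i b : Qf (sr i + b) = Qf b + 2 * Dj i b + 2.
Proof.
rewrite /Qf !BfDl !BfDr Bf_srsr Aii Bf_srr -/(Dj i b) -/(Qf b).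
rewrite /Dj; lia.
Qed.
Lemma QfB i b : Qf (b - sr i) = Qf b - 2 * Dj i b + 2.
Proof.
rewrite /Qf !BfDl !BfDr !BfNl !BfNr Bf_srsr Aii Bf_srr -/(Dj i b) -/(Qf b).
rewrite /Dj opprK; lia.
Qed.
Lemma QfN b : Qf (- b) = Qf b.
Proof. by rewrite /Qf BfNl BfNr opprK. Qed.
Lemma Qfsr i : Qf (sr i) = 2.
Proof. by rewrite /Qf Bf_srsr Aii. Qed.
Lemma Djsr j i : Dj j (sr i) = A j i.
Proof. exact: Bf_srsr. Qed.

Lemma htD x y : ht (x + y) = ht x + ht y.
Proof. by rewrite /ht -big_split; apply: eq_bigr => i _; rewrite mxE. Qed.
Lemma htN x : ht (- x) = - ht x.
Proof. by rewrite /ht -sumrN; apply: eq_bigr => i _; rewrite mxE. Qed.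
Lemma htsr i : ht (sr i) = 1.
Proof.
rewrite /ht (bigD1 i) //= [X in _ + X]big1 ?addr0; first by rewrite /simple_root mxE !eqxx.
move=> l /negPf nl; by rewrite /simple_root mxE nl andbF.
Qed.
End Deg.


Lemma anti_lemma (R : pzRingType) (u v k : R) : (forall y, k * y = y * k) ->
  u * u = k -> k *+ 4 = -1 -> u * (u * v - v * u) - (u * v - v * u) * u = - v ->
  u * v = - (v * u).
Proof.
move=> kC uu k4 H.
have kreg : forall y : R, k * y = 0 -> y = 0.
  move=> y Hy; have : (k *+ 4) * y = - y by rewrite k4 mulN1r.
  by rewrite mulrnAl Hy mul0rn => /eqP; rewrite eq_sym oppr_eq0 => /eqP.
have reg : forall y : R, y *+ 4 = 0 -> y = 0.
  move=> y Hy; have : (k *+ 4) * y = - y by rewrite k4 mulN1r.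
  by rewrite mulrnAl -mulrnAr Hy mulr0 => /eqP; rewrite eq_sym oppr_eq0 => /eqP.
set a := u * v * u; set b := k * v.
have E1 : u * (u * v) = b by rewrite mulrA uu.
have E2 : u * (v * u) = a by rewrite mulrA.
have E3 : v * u * u = b by rewrite -mulrA uu -kC.
move: H; rewrite mulrBr mulrBl E1 E2 E3 -/a opprB => H.
have b4 : b *+ 4 = - v by rewrite /b -mulrnAl k4 mulN1r.
have H2 : a *+ 2 = - (b *+ 2).
  have : (b - a) *+ 2 = b *+ 2 + b *+ 2 by rewrite -mulrnDr /= b4 mulr2n.
  by rewrite mulrnBl => /addrI /eqP; rewrite eqr_oppLR => /eqP.
have uP0 : u * (u * v + v * u) = 0.
  apply: reg; rewrite mulrDr E1 E2.
  have -> : (b + a) *+ 4 = (b + a) *+ 2 *+ 2 by rewrite -mulrnA.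
  by rewrite (mulrnDl 2 b a) H2 subrr mul0rn.
have P0 : u * v + v * u = 0 by apply: kreg; rewrite -uu -mulrA uP0 mulr0.
by apply/eqP; rewrite -addr_eq0; apply/eqP.
Qed.

Section Spin.
Variables (F : fieldType) (m : nat) (A : 'M[int]_m).
Hypothesis hSL : simply_laced A.
Variables (G : lmodType F) (br : G -> G -> G) (e f h : 'I_m -> G).
Hypothesis hL : is_lie br.
Hypothesis hS : serre_rel A br e f h.
Variable omega : G -> G.
Hypothesis hom : is_lie_hom br br omega.
Hypothesis omega_gen : forall i, [/\ omega (e i) = - f i, omega (f i) = - e i
                           & omega (h i) = - h i].
Hypothesis oo : forall x, omega (omega x) = x.
Variables (L : fieldExtType F) (s : nat) (rho : G -> 'M[L]_s).
Hypothesis rho_lin : forall (c : F) x y, omega x = x -> omega y = y ->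
               rho (c *: x + y) = c%:A *: rho x + rho y.
Hypothesis rho_br : forall x y, omega x = x -> omega y = y ->
               rho (br x y) = rho x *m rho y - rho y *m rho x.
Hypothesis rho_spin : forall i, rho (e i - f i) *m rho (e i - f i)
                        = (- (4%:R)^-1) %:M.
Hypothesis two_nz : (2%:R : L) != 0.
Local Notation sr := (@simple_root m).

Lemma omZD a x y : omega (a *: x + y) = a *: omega x + omega y.
Proof. by case: hom. Qed.
Lemma ombr x y : omega (br x y) = br (omega x) (omega y).
Proof. by case: hom. Qed.
Lemma om0 : omega 0 = 0.
Proof. by apply: (addrI (omega 0)); rewrite -{1}(scale1r (omega 0)) -omZD scale1r !addr0. Qed.
Lemma omD x y : omega (x + y) = omega x + omega y.
Proof. by rewrite -(scale1r x) omZD !scale1r. Qed.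
Lemma omZ a x : omega (a *: x) = a *: omega x.
Proof. by rewrite -(addr0 (a *: x)) omZD om0 addr0. Qed.
Lemma omN x : omega (- x) = - omega x.
Proof. by rewrite -scaleN1r omZ scaleN1r. Qed.
Lemma omB x y : omega (x - y) = omega x - omega y.
Proof. by rewrite omD omN. Qed.

Definition Fix x := omega x = x.
Lemma fixS x : Fix (x + omega x).
Proof. by rewrite /Fix omD oo addrC. Qed.
Lemma fix0 : Fix 0. Proof. exact: om0. Qed.
Lemma fixD x y : Fix x -> Fix y -> Fix (x + y).
Proof. by rewrite /Fix omD => -> ->. Qed.
Lemma fixZ c x : Fix x -> Fix (c *: x).
Proof. by rewrite /Fix omZ => ->. Qed.
Lemma fixbr x y : Fix x -> Fix y -> Fix (br x y).
Proof. by rewrite /Fix ombr => -> ->. Qed.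

Lemma rho0 : rho 0 = 0.
Proof.
have := rho_lin (-1) fix0 fix0; rewrite scaler0 addr0 scaleNr scale1r scaleN1r.
by move/eqP; rewrite addrC subrr eq_sym => /eqP.
Qed.
Lemma rhoD x y : Fix x -> Fix y -> rho (x + y) = rho x + rho y.
Proof. move=> Hx Hy. have := rho_lin 1 Hx Hy. by rewrite !scale1r. Qed.
Lemma rhoZ c x : Fix x -> rho (c *: x) = c%:A *: rho x.
Proof. move=> Hx. have := rho_lin c Hx fix0. by rewrite !addr0 rho0 addr0. Qed.
Lemma rhoN x : Fix x -> rho (- x) = - rho x.
Proof. by move=> Hx; rewrite -scaleN1r rhoZ // scaleNr scale1r scaleN1r. Qed.
Lemma rhoB x y : Fix x -> Fix y -> rho (x - y) = rho x - rho y.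
Proof. by move=> Hx Hy; rewrite rhoD ?rhoN //; rewrite /Fix omN Hy. Qed.

Definition X i := e i - f i.
Definition g i := rho (X i).
Lemma fixX i : Fix (X i).
Proof. by rewrite /Fix /X omB; case: (omega_gen i) => -> -> _; rewrite opprK addrC. Qed.


Lemma XX0 i j : i != j -> A i j = 0 -> br (X i) (X j) = 0.
Proof.
move=> nij Aij; have [_ _ _ _ [SE SF]] := hS.
have E : br (e i) (e j) = 0 by move: (SE i j nij); rewrite Aij; apply.
have Fq : br (f i) (f j) = 0 by move: (SF i j nij); rewrite Aij; apply.
have nji : (j == i) = false by rewrite eq_sym (negPf nij).
rewrite /X (brBl hL) !(brBr hL) E Fq (hef hS) (negPf nij) (brC hL (f i)) (hef hS) nji.
by rewrite !oppr0 !subrr.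
Qed.

Lemma XX1 i j : i != j -> A i j = -1 -> br (X i) (br (X i) (X j)) = - X j.
Proof.
move=> nij Aij; have [_ _ _ _ [SE SF]] := hS.
have E : br (e i) (br (e i) (e j)) = 0 by move: (SE i j nij); rewrite Aij; apply.
have Fq : br (f i) (br (f i) (f j)) = 0 by move: (SF i j nij); rewrite Aij; apply.
have nji : (j == i) = false by rewrite eq_sym (negPf nij).
have -> : br (X i) (X j) = br (e i) (e j) + br (f i) (f j).
  rewrite /X (brBl hL) !(brBr hL) (hef hS) (negPf nij) (brC hL (f i)) (hef hS) nji.
  by rewrite !oppr0 !addr0 sub0r opprK.
rewrite /X (brBl hL) !(brDr hL).
rewrite E Fq.
rewrite (jacobi hL (e i)) (hef hS) eqxx (hhf hS) Aij (hef hS) (negPf nij) (br0r hL).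
rewrite (jacobi hL (f i)) (brC hL (f i) (e i)) (hef hS) eqxx (brNl hL) (hhe hS) Aij.
rewrite (brC hL (f i) (e j)) (hef hS) nji oppr0 (br0r hL) rmorphN1 !scaleN1r.
by rewrite !addr0 !add0r !opprK opprB addrC.
Qed.

Lemma gcomm0 i j : i != j -> A i j = 0 -> g i *m g j = g j *m g i.
Proof.
move=> nij Aij; have := rho_br (fixX i) (fixX j); rewrite XX0 // rho0.
by move/eqP; rewrite eq_sym subr_eq0 => /eqP.
Qed.

Hypothesis four_nz : (4%:R : L) != 0.

Lemma ganti i j : i != j -> A i j = -1 -> g i *m g j = - (g j *m g i).
Proof.
move=> nij Aij.
have H : rho (br (X i) (br (X i) (X j))) =
   g i *m rho (br (X i) (X j)) - rho (br (X i) (X j)) *m g i.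
  exact: (rho_br (fixX i) (fixbr (fixX i) (fixX j))).
have E2 : rho (br (X i) (X j)) = g i *m g j - g j *m g i.
  exact: (rho_br (fixX i) (fixX j)).
rewrite XX1 // E2 in H; rewrite rhoN in H; last exact: fixX.
have sq := rho_spin i.
rewrite !mulmxE in H sq *.
apply: (@anti_lemma _ (g i) (g j) (- (4%:R)^-1)%:M) => //.
- by move=> y; rewrite -!mulmxE scalar_mxC.
- by rewrite -scalemx1 scalerMnl mulNrn -(mulr_natr ((4%:R : L)^-1) 4) mulVf // scaleN1r idmxE.
Qed.

Definition sg (b : bool) : L := if b then 1 else -1.
Lemma sgM b1 b2 : sg b1 * sg b2 = sg (b1 == b2).
Proof. by case: b1; case: b2; rewrite /sg ?mulr1 ?mul1r ?mulrNN ?mulr1. Qed.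

Lemma grel j i : g j *m g i = sg (2 %| A j i)%Z *: (g i *m g j).
Proof.
case: (eqVneq j i) => [->|nji]; first by rewrite Aii // /sg /= scale1r.
have [_ H] := hSL j i; rewrite (negPf nji) in H; case: H => E; rewrite E.
- by rewrite /sg /= scale1r; apply: gcomm0.
- by rewrite /sg /= scaleN1r; apply: ganti.
Qed.

Definition Rp a (M : 'M[L]_s) := ((4 %| Qf A a)%Z -> M = 0) /\ forall j, g j *m M = sg (2 %| Dj A j a)%Z *: (M *m g j).

Lemma Rp0 a : Rp a 0.
Proof. by split=> // j; rewrite mulmx0 mul0mx scaler0. Qed.
Lemma RpD a M N : Rp a M -> Rp a N -> Rp a (M + N).
Proof.
move=> [Z1 C1] [Z2 C2]; split; first by move=> H; rewrite Z1 // Z2 // addr0.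
by move=> j; rewrite mulmxDr mulmxDl C1 C2 scalerDr.
Qed.
Lemma RpZ a c M : Rp a M -> Rp a (c *: M).
Proof.
move=> [Z1 C1]; split; first by move=> H; rewrite Z1 // scaler0.
by move=> j; rewrite -scalemxAr C1 -scalemxAl !scalerA mulrC.
Qed.

Lemma Rstep i b M1 M2 : Rp b M1 -> Rp (b - sr i) M2 ->
  Rp (sr i + b) (g i *m M1 - M1 *m g i + M2).
Proof.
move=> [Z1 C1] [Z2 C2]; split.
- move=> H4; rewrite (QfS hSL) in H4.
  have -> : M2 = 0 by apply: Z2; rewrite (QfB hSL); lia.
  rewrite addr0; case E: (2 %| Dj A i b)%Z.
  + by rewrite C1 E /sg scale1r subrr.
  + have -> : M1 = 0 by apply: Z1; move/negbT: E => E; lia.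
    by rewrite mulmx0 mul0mx subrr.
- move=> j; rewrite DjS.
  set s0 := (2 %| A j i)%Z; set t0 := (2 %| Dj A j b)%Z.
  have par : (2 %| A j i + Dj A j b)%Z = (s0 == t0).
    rewrite /s0 /t0; case: (boolP (2 %| A j i)%Z) => H1; case: (boolP (2 %| Dj A j b)%Z) => H2;
    apply/idP/idP => //=; lia.
  have par2 : (2 %| Dj A j (b - sr i))%Z = (s0 == t0).
    rewrite DjB -par; apply/idP/idP; lia.
  have T1 : g j *m (g i *m M1) = sg (s0 == t0) *: (g i *m M1 *m g j).
    by rewrite mulmxA grel -scalemxAl -mulmxA C1 -scalemxAr scalerA sgM mulmxA.
  have T2 : g j *m (M1 *m g i) = sg (s0 == t0) *: (M1 *m g i *m g j).
    by rewrite mulmxA C1 -scalemxAl -mulmxA grel -scalemxAr scalerA sgM eq_sym mulmxA.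
  have T3 : g j *m M2 = sg (s0 == t0) *: (M2 *m g j) by rewrite C2 par2.
  by rewrite par mulmxDr mulmxBr T1 T2 T3 !mulmxDl mulNmx scalerDr scalerBr.
Qed.
Lemma Hsp_om z : Hsp h z -> omega z = - z.
Proof.
elim=> [i||x y _ IH1 _ IH2|c x _ IH].
- by case: (omega_gen i).
- by rewrite om0 oppr0.
- by rewrite omD IH1 IH2 opprD.
- by rewrite omZ IH scalerN.
Qed.

Lemma Hd_om a z : Hd h a z -> z + omega z = 0.
Proof. by case=> [[_ Hz]|->]; [rewrite Hsp_om // subrr|rewrite om0 addr0]. Qed.

Lemma keyid i x : br (e i) x + omega (br (e i) x) =
  br (X i) (x + omega x) + (br (f i) x + omega (br (f i) x)).
Proof.
case: (omega_gen i) => Oe Of _.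
rewrite !ombr Oe Of !(brNl hL) /X (brBl hL) !(brDr hL).
set p := br (e i) x; set q := br (e i) (omega x); set r := br (f i) x; set t := br (f i) (omega x).
by rewrite opprD !addrA (addrAC _ (- t) r) subrK (addrAC _ (- t) (- q)) addrK.
Qed.

Lemma PosHt a x : Pos br e a x -> x = 0 \/ 0 < ht a.
Proof.
elim=> {a x} [i|i b x _ IH|a|a x y _ IH1 _ IH2|a c x _ IH].
- by right; rewrite htsr.
- case: IH => [->|H]; first by left; rewrite (br0r hL).
  by right; rewrite htD htsr; lia.
- by left.
- case: IH1 => [->|H]; last by right.
  by case: IH2 => [->|H]; [left; rewrite addr0|right].
- by case: IH => [->|H]; [left; rewrite scaler0|right].
Qed.

Lemma Rp_zero a : Rp a (rho (0 + omega 0)).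
Proof. by rewrite om0 addr0 rho0; apply: Rp0. Qed.
Lemma Rpe i : Rp (sr i) (rho (e i + omega (e i))).
Proof.
case: (omega_gen i) => -> _ _; split.
- by rewrite (Qfsr hSL) => H; exfalso; move: H; lia.
- by move=> j; rewrite Djsr grel.
Qed.
Lemma Rp_add a x y : Rp a (rho (x + omega x)) -> Rp a (rho (y + omega y)) ->
  Rp a (rho ((x + y) + omega (x + y))).
Proof.
move=> H1 H2; rewrite omD addrACA rhoD; [exact: RpD|exact: fixS|exact: fixS].
Qed.
Lemma Rp_scale a c x : Rp a (rho (x + omega x)) -> Rp a (rho (c *: x + omega (c *: x))).
Proof. by move=> H; rewrite omZ -scalerDr rhoZ; [exact: RpZ|exact: fixS]. Qed.

Lemma Rpos n : forall a x, Pos br e a x -> ht a <= n%:Z -> Rp a (rho (x + omega x)).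
Proof.
elim: n => [|n IHn] a x Hx; elim: Hx => {a x} [i|i b x Hx _|a|a x y _ IH1 _ IH2|a c x _ IH] Hn;
  [exact: Rpe| |exact: Rp_zero|by apply: Rp_add; [apply: IH1|apply: IH2]|by apply: Rp_scale; apply: IH
  |exact: Rpe| |exact: Rp_zero|by apply: Rp_add; [apply: IH1|apply: IH2]|by apply: Rp_scale; apply: IH].
- case: (PosHt Hx) => [->|H]; first by rewrite (br0r hL); exact: Rp_zero.
  by exfalso; rewrite htD htsr in Hn; lia.
- rewrite keyid.
  have [z1 [z2 [Ez H1 H2]]] := FbrPos hL hS i Hx.
  have E : br (f i) x + omega (br (f i) x) = z1 + omega z1.
    by rewrite Ez omD addrACA (Hd_om H2) addr0.
  have Eb : rho (br (X i) (x + omega x)) = g i *m rho (x + omega x) - rho (x + omega x) *m g i.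
    exact: (rho_br (fixX i) (fixS x)).
  rewrite E rhoD; last exact: fixS.
    rewrite Eb; apply: Rstep.
    + by apply: IHn => //; rewrite htD htsr in Hn; lia.
    + by apply: IHn => //; rewrite htD htN htsr; rewrite htD htsr in Hn; lia.
  by apply: fixbr; [exact: fixX|exact: fixS].
Qed.

Lemma RposAll a x : Pos br e a x -> Rp a (rho (x + omega x)).
Proof.
move=> Hx; case: (PosHt Hx) => [->|H]; first exact: Rp_zero.
apply: (@Rpos `|ht a|%N) => //; lia.
Qed.
End Spin.


Lemma NegOm (F : fieldType) (m : nat) (G : lmodType F) (br : G -> G -> G) (e f h : 'I_m -> G)
  (hL : is_lie br) (omega : G -> G) (hom : is_lie_hom br br omega)
  (omega_gen : forall i, [/\ omega (e i) = - f i, omega (f i) = - e i & omega (h i) = - h i])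
  a y : Neg br f a y -> Pos br e (- a) (omega y).
Proof.
elim=> {a y} [i|i b x _ IH|a|a x y _ IH1 _ IH2|a c x _ IH].
- by case: (omega_gen i) => _ -> _; rewrite opprK; apply: PN; apply: Pe.
- rewrite (ombr hom); case: (omega_gen i) => _ -> _.
  by rewrite (brNl hL) opprD opprK; apply: PN; apply: Pbr.
- by rewrite (om0 hom); apply: P0.
- by rewrite (omD hom); apply: PD.
- by rewrite (omZ hom); apply: PZ.
Qed.

Lemma Qf_null (m : nat) (A : 'M[int]_m) (a : 'I_m -> nat) :
  positive_null A a -> Qf A (null_root a) = 0.
Proof.
case=> _ Hn; rewrite /Qf /Bf; apply: big1 => i _.
under eq_bigr => j _ do rewrite !mxE -mulrA.
by rewrite -big_distrr /= Hn mulr0.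
Qed.

Unset Implicit Arguments. Set Strict Implicit.

Theorem mainTheorem13
  (F : fieldType) (charF0 : [pchar F] =i pred0)
  (m : nat) (A : 'M[int]_m)
  (hSL : simply_laced A) (hAff : affine_type A)
  (G : lmodType F) (br : G -> G -> G) (e f h : 'I_m -> G)
  (hKM : is_KM_algebra A br e f h)
  (omega : G -> G)
  (hom_omega : is_lie_hom br br omega)
  (omega_gen : forall i, [/\ omega (e i) = - f i, omega (f i) = - e i
                           & omega (h i) = - h i])
  (a : 'I_m -> nat) (ha : null_root_marks A a)
  (L : fieldExtType F) (I : L) (hI : I * I = -1)
  (hL : (<<1%VS; I>>)%VS = fullv)
  (s : nat) (rho : G -> 'M[L]_s)
  (rho_lin : forall (c : F) x y, omega x = x -> omega y = y ->
               rho (c *: x + y) = c%:A *: rho x + rho y)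
  (rho_br : forall x y, omega x = x -> omega y = y ->
               rho (br x y) = rho x *m rho y - rho y *m rho x)
  (rho_spin : forall i, rho (e i - f i) *m rho (e i - f i)
                        = (- (4%:R)^-1) %:M) :
  forall x,
    in_k_ideal br omega
      (fun z => exists y, homogeneous br e f h (null_root a) y /\ z = y + omega y) x ->
    rho x = 0.
Proof.
have [hLie hS U] := hKM.
have oo : forall x, omega (omega x) = x.
  have [_ uniq] := U G br e f h hLie hS.
  have hid : is_lie_hom br br id by [].
  have hoo : is_lie_hom br br (fun x => omega (omega x)).
    split; first by move=> c u v; rewrite !(omZD hom_omega).
    by move=> u v; rewrite !(ombr hom_omega).
  have g1 : forall i, [/\ omega (omega (e i)) = e i, omega (omega (f i)) = f i
       & omega (omega (h i)) = h i].
    move=> i; case: (omega_gen i) => Oe Of Oh.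
    by rewrite Oe Of Oh !(omN hom_omega) Oe Of Oh !opprK.
  have g2 : forall i, [/\ id (e i) = e i, id (f i) = f i & id (h i) = h i] by [].
  by move=> x; exact: (uniq _ _ hoo hid g1 g2 x).
have nz : forall n, (0 < n)%N -> (n%:R : L) != 0.
  move=> n n0; rewrite -(rmorph_nat (in_alg L)) fmorph_eq0.
  by rewrite ((pcharf0P F).1 charF0 n) -lt0n.
have two_nz := nz 2%N isT; have four_nz := nz 4%N isT.
have Rall := RposAll hSL hLie hS hom_omega omega_gen oo rho_lin rho_br rho_spin two_nz four_nz.
have Q0 : Qf A (null_root a) = 0 by apply: Qf_null; case: ha.
suff : forall x, in_k_ideal br omega
      (fun z => exists y, homogeneous br e f h (null_root a) y /\ z = y + omega y) x ->
    rho x = 0 /\ omega x = x by move=> H x Hx; case: (H x Hx).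
move=> x; elim=> {x} [z [y [Hy ->]]| |x y _ [R1 F1] _ [R2 F2]|c x _ [R1 F1]|y x Fy _ [R1 F1]].
- split; last exact: (fixS hom_omega oo).
  have [y1 [y2 [y3 [-> H1 H2 H3]]]] := homogV hLie hS Hy.
  rewrite !(omD hom_omega) addrACA (addrACA y1) (Hd_om hom_omega omega_gen H3) addr0.
  have Fx := fixS hom_omega oo.
  rewrite (rhoD rho_lin (Fx _) (Fx _)).
  have -> : rho (y1 + omega y1) = 0.
    by case: (Rall _ _ H1) => Z _; apply: Z; rewrite Q0.
  have Hw := NegOm hLie hom_omega omega_gen H2.
  have -> : y2 + omega y2 = omega y2 + omega (omega y2) by rewrite oo addrC.
  case: (Rall _ _ Hw) => Z _; rewrite Z ?addr0 //.
  by rewrite QfN Q0.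
- by split; [exact: (rho0 hom_omega rho_lin)|exact: (om0 hom_omega)].
- split; first by rewrite (rhoD rho_lin F1 F2) R1 R2 addr0.
  exact: (fixD hom_omega F1 F2).
- split; first by rewrite (rhoZ hom_omega rho_lin _ F1) R1 scaler0.
  exact: (fixZ hom_omega _ F1).
- split; first by rewrite (rho_br _ _ Fy F1) R1 mulmx0 mul0mx subrr.
  exact: (fixbr hom_omega Fy F1).
Qed.
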